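(* Let $\Sigma\supseteq\Sigma_m$ be a signature and $E\supseteq\mathrm{Md}$ a set of $\Sigma$-equations such that $(\Sigma,E)$ has the propagation property for pseudo units and the propagation property for pseudo zeros. Then for all closed $\Sigma$-terms $t,r,s$: (i) if $E\cup\{t=0\}\vdash_{\mathrm{IR}} r=s$ then $E\vdash 0_t\cdot r=0_t\cdot s$; (ii) if $E\cup\{1_t=1\}\vdash_{\mathrm{IR}} r=s$ then $E\vdash 1_t\cdot r=1_t\cdot s$.
   Context: $\Sigma_m=(0,1,+,\cdot,-,{}^{-1})$; $\mathrm{Md}$ is the set of equations $(x+y)+z=x+(y+z)$, $x+y=y+x$, $x+0=x$, $x+(-x)=0$, $(x\cdot y)\cdot z=x\cdot(y\cdot z)$, $x\cdot y=y\cdot x$, $1\cdot x=x$, $x\cdot(y+z)=x\cdot y+x\cdot z$, $(x^{-1})^{-1}=x$, $x\cdot(x\cdot x^{-1})=x$. $1_t$ abbreviates $t\cdot t^{-1}$, $0_t$ abbreviates $1+(-1_t)$. $\vdash$ denotes derivability in equational logic. $(\Sigma,E)$ has the propagation property for pseudo units if for all $\Sigma$-terms $t,r$ and every context $C[\,]$, $E\vdash 1_t\cdot C[r]=1_t\cdot C[1_t\cdot r]$; it has the propagation property for pseudo zeros if for all $\Sigma$-terms $t,r$ and every context $C[\,]$, $E\vdash 0_t\cdot C[r]=0_t\cdot C[0_t\cdot r]$. The inverse rule IR is: from $F\cup\{h=0\}\vdash r=s$ and $F\cup\{1_h=1\}\vdash r=s$ infer $F\vdash r=s$, with $h$ ranging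 over closed $\Sigma$-terms. $F\vdash_{\mathrm{IR}} r=s$ means $r=s$ is derivable from $F$ in equational logic extended with finitely many applications of IR. *)

(* Defs.v *)
From Stdlib Require Import List.
Import ListNotations.
Set Implicit Arguments.

Inductive msym : Type := mZero | mOne | mAdd | mMul | mNeg | mInv.

Definition marity (f : msym) : nat :=
  match f with
  | mZero | mOne => 0
  | mAdd | mMul => 2
  | mNeg | mInv => 1
  end.

(** A signature Sigma containing Sigma_m: the symbols of Sigma_m together with
    an arbitrary type of further symbols with arities. *)
Record signature : Type := {
  xsym : Type;
  xar : xsym -> nat
}.

Definition sym (Sg : signature) : Type := (msym + xsym Sg)%type.

Definition ar {Sg : signature} (f : sym Sg) : nat :=
  match f with inl g => marity g | inr g => xar Sg g end.

(** Terms over variables indexed by nat (raw syntax; arity checked by [wf]). *)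
Inductive term (Sg : signature) : Type :=
| Var : nat -> term Sg
| Fun : sym Sg -> list (term Sg) -> term Sg.
Arguments Var {Sg} _.
Arguments Fun {Sg} _ _.

Inductive wf {Sg : signature} : term Sg -> Prop :=
| wf_var n : wf (Var n)
| wf_fun f args : length args = ar f -> Forall wf args -> wf (Fun f args).

Inductive closed {Sg : signature} : term Sg -> Prop :=
| closed_fun f args : Forall closed args -> closed (Fun f args).

Fixpoint subst {Sg : signature} (sg : nat -> term Sg) (t : term Sg) : term Sg :=
  match t with
  | Var n => sg n
  | Fun f args => Fun f (map (subst sg) args)
  end.

Inductive ctx (Sg : signature) : Type :=
| Hole : ctx Sg
| CFun : sym Sg -> list (term Sg) -> ctx Sg -> list (term Sg) -> ctx Sg.
Arguments Hole {Sg}.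
Arguments CFun {Sg} _ _ _ _.

Inductive wf_ctx {Sg : signature} : ctx Sg -> Prop :=
| wf_hole : wf_ctx Hole
| wf_cfun f l c r :
    length l + Datatypes.S (length r) = ar f -> Forall wf l -> wf_ctx c -> Forall wf r ->
    wf_ctx (CFun f l c r).

Fixpoint plug {Sg : signature} (c : ctx Sg) (t : term Sg) : term Sg :=
  match c with
  | Hole => t
  | CFun f l c' r => Fun f (l ++ plug c' t :: r)
  end.

Section Ops.
Context {Sg : signature}.
Definition tzero : term Sg := Fun (inl mZero) [].
Definition tone : term Sg := Fun (inl mOne) [].
Definition tadd (a b : term Sg) : term Sg := Fun (inl mAdd) [a; b].
Definition tmul (a b : term Sg) : term Sg := Fun (inl mMul) [a; b].
Definition tneg (a : term Sg) : term Sg := Fun (inl mNeg) [a].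
Definition tinv (a : term Sg) : term Sg := Fun (inl mInv) [a].
Definition one_t (t : term Sg) : term Sg := tmul t (tinv t).
Definition zero_t (t : term Sg) : term Sg := tadd tone (tneg (one_t t)).
End Ops.

Definition eqset (Sg : signature) : Type := term Sg -> term Sg -> Prop.

Definition add_eq {Sg : signature} (F : eqset Sg) (a b : term Sg) : eqset Sg :=
  fun x y => F x y \/ (x = a /\ y = b).

Definition Md {Sg : signature} : eqset Sg :=
  let x : term Sg := Var 0 in let y : term Sg := Var 1 in let z : term Sg := Var 2 in
  fun a b =>
    (a = tadd (tadd x y) z /\ b = tadd x (tadd y z)) \/
    (a = tadd x y /\ b = tadd y x) \/
    (a = tadd x tzero /\ b = x) \/
    (a = tadd x (tneg x) /\ b = tzero) \/
    (a = tmul (tmul x y) z /\ b = tmul x (tmul y z)) \/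
    (a = tmul x y /\ b = tmul y x) \/
    (a = tmul tone x /\ b = x) \/
    (a = tmul x (tadd y z) /\ b = tadd (tmul x y) (tmul x z)) \/
    (a = tinv (tinv x) /\ b = x) \/
    (a = tmul x (tmul x (tinv x)) /\ b = x).

(** Derivability. [deriv false F r s] is F |- r = s in equational logic;
    [deriv true F r s] is F |-_IR r = s (equational logic + the inverse rule IR,
    applicable finitely often, i.e. any finite derivation tree). *)
Inductive deriv {Sg : signature} (ir : bool) : eqset Sg -> term Sg -> term Sg -> Prop :=
| d_ax F a b : F a b -> deriv ir F a b
| d_refl F a : wf a -> deriv ir F a a
| d_sym F a b : deriv ir F a b -> deriv ir F b a
| d_trans F a b c : deriv ir F a b -> deriv ir F b c -> deriv ir F a c
| d_ctx F (C : ctx Sg) a b : wf_ctx C -> deriv ir F a b -> deriv ir F (plug C a) (plug C b)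
| d_subst F (sg : nat -> term Sg) a b :
    (forall n, wf (sg n)) -> deriv ir F a b -> deriv ir F (subst sg a) (subst sg b)
| d_IR F (h : term Sg) r s :
    ir = true -> wf h -> closed h ->
    deriv ir (add_eq F h tzero) r s -> deriv ir (add_eq F (one_t h) tone) r s ->
    deriv ir F r s.

Definition prop_pseudo_units {Sg : signature} (E : eqset Sg) : Prop :=
  forall (t r : term Sg) (C : ctx Sg), wf t -> wf r -> wf_ctx C ->
    deriv false E (tmul (one_t t) (plug C r)) (tmul (one_t t) (plug C (tmul (one_t t) r))).

Definition prop_pseudo_zeros {Sg : signature} (E : eqset Sg) : Prop :=
  forall (t r : term Sg) (C : ctx Sg), wf t -> wf r -> wf_ctx C ->
    deriv false E (tmul (zero_t t) (plug C r)) (tmul (zero_t t) (plug C (tmul (zero_t t) r))).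

(* Main.v *)
Require Import Defs.
From Stdlib Require Import List.
Import ListNotations.

Fixpoint term_ind' {Sg : signature} (P : term Sg -> Prop)
  (Hv : forall n, P (Var n)) (Hf : forall f args, Forall P args -> P (Fun f args))
  (t : term Sg) : P t :=
  match t with
  | Var n => Hv n
  | Fun f args => Hf f args ((fix go l := match l return Forall P l with
        | [] => Forall_nil _ | x :: l' => Forall_cons _ (term_ind' P Hv Hf x) (go l') end) args)
  end.

Lemma wf_subst {Sg : signature} (sg : nat -> term Sg) :
  (forall n, wf (sg n)) -> forall t, wf t -> wf (subst sg t).
Proof.
  intros Hs t. induction t as [n|f args IH] using term_ind'; intros Ht; simpl; auto.
  inversion Ht as [|? ? Hlen Hall]; subst. constructor. rewrite length_map; auto.
  clear Hlen Ht. induction args as [|a l IHl]; simpl; constructor.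
  all: inversion IH as [|? ? Ha Hl]; inversion Hall as [|? ? Wa Wl]; subst; auto.
Qed.

Lemma closed_subst {Sg : signature} (sg : nat -> term Sg) :
  forall t, closed t -> subst sg t = t.
Proof.
  intros t. induction t as [n|f args IH] using term_ind'; intros Ht; simpl.
  - inversion Ht.
  - inversion Ht; subst. f_equal. clear Ht.
    induction args as [|a l IHl]; simpl; auto.
    inversion IH; inversion H0; subst. f_equal; auto.
Qed.

Lemma wf_plug {Sg : signature} (C : ctx Sg) a : wf_ctx C -> wf a -> wf (plug C a).
Proof.
  intros HC Ha. induction HC; simpl; auto.
  constructor. rewrite length_app; simpl; auto.
  apply Forall_app; split; auto.
Qed.

Lemma deriv_wf {Sg : signature} ir (F : eqset Sg) a b :
  deriv ir F a b -> (forall x y, F x y -> wf x /\ wf y) -> wf a /\ wf b.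
Proof.
  intros H. induction H; intros HF; auto.
  - destruct IHderiv; auto.
  - destruct IHderiv1, IHderiv2; auto.
  - destruct IHderiv; auto using wf_plug.
  - destruct IHderiv; auto using wf_subst.
  - apply IHderiv1. intros x y [Hx|[-> ->]]; auto. split; auto. constructor; auto.
Qed.

Section W.
Context {Sg : signature}.
Lemma wf_add (a b : term Sg) : wf a -> wf b -> wf (tadd a b).
Proof. intros; constructor; auto. Qed.
Lemma wf_mul (a b : term Sg) : wf a -> wf b -> wf (tmul a b).
Proof. intros; constructor; auto. Qed.
Lemma wf_neg (a : term Sg) : wf a -> wf (tneg a).
Proof. intros; constructor; auto. Qed.
Lemma wf_inv (a : term Sg) : wf a -> wf (tinv a).
Proof. intros; constructor; auto. Qed.
Lemma wf_zero : wf (@tzero Sg).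
Proof. constructor; auto. Qed.
Lemma wf_one : wf (@tone Sg).
Proof. constructor; auto. Qed.
Lemma wf_one_t (a : term Sg) : wf a -> wf (one_t a).
Proof. intros; unfold one_t; auto using wf_mul, wf_inv. Qed.
Lemma wf_zero_t (a : term Sg) : wf a -> wf (zero_t a).
Proof. intros; unfold zero_t; auto using wf_add, wf_neg, wf_one, wf_one_t. Qed.
End W.
#[export] Hint Resolve wf_add wf_mul wf_neg wf_inv wf_zero wf_one wf_one_t wf_zero_t : core.

Definition MdE {Sg : signature} (E : eqset Sg) := forall a b, Md a b -> E a b.
Definition sg3 {Sg : signature} (x y z : term Sg) : nat -> term Sg :=
  fun n => match n with 0 => x | 1 => y | _ => z end.

Lemma inst {Sg : signature} (E : eqset Sg) (H : MdE E) a b : Md a b ->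
  forall x y z, wf x -> wf y -> wf z ->
  deriv false E (subst (sg3 x y z) a) (subst (sg3 x y z) b).
Proof.
  intros Hab x y z Hx Hy Hz. apply d_subst.
  - intros [|[|n]]; simpl; auto.
  - apply d_ax; auto.
Qed.

Ltac md := unfold Md; repeat (first [left; split; reflexivity | right]); try (split; reflexivity).
Ltac useax A B := match goal with H : MdE _ |- _ =>
  exact (inst _ H A B ltac:(md) _ _ _ ltac:(eauto) ltac:(eauto) ltac:(eauto)) end.

Section Alg.
Context {Sg : signature} (E : eqset Sg) (HE : MdE E).
Local Notation D := (deriv false E).
Local Notation x0 := (Var 0 : term Sg).
Local Notation x1 := (Var 1 : term Sg).
Local Notation x2 := (Var 2 : term Sg).


Ltac ax A B := exact (inst _ HE A B ltac:(md) _ _ _ ltac:(eauto) ltac:(eauto) ltac:(eauto)).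
Lemma addA x y z : wf x -> wf y -> wf z -> D (tadd (tadd x y) z) (tadd x (tadd y z)).
Proof. intros Hx Hy Hz. exact (inst _ HE (tadd (tadd x0 x1) x2) _ ltac:(md) x y z Hx Hy Hz). Qed.
Lemma addC x y : wf x -> wf y -> D (tadd x y) (tadd y x).
Proof. intros Hx Hy. exact (inst _ HE (tadd x0 x1) _ ltac:(md) x y x Hx Hy Hx). Qed.
Lemma add0 x : wf x -> D (tadd x tzero) x.
Proof. intros Hx. exact (inst _ HE (tadd x0 tzero) _ ltac:(md) x x x Hx Hx Hx). Qed.
Lemma addN x : wf x -> D (tadd x (tneg x)) tzero.
Proof. intros Hx. exact (inst _ HE (tadd x0 (tneg x0)) _ ltac:(md) x x x Hx Hx Hx). Qed.
Lemma mulA x y z : wf x -> wf y -> wf z -> D (tmul (tmul x y) z) (tmul x (tmul y z)).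
Proof. intros Hx Hy Hz. exact (inst _ HE (tmul (tmul x0 x1) x2) _ ltac:(md) x y z Hx Hy Hz). Qed.
Lemma mulC x y : wf x -> wf y -> D (tmul x y) (tmul y x).
Proof. intros Hx Hy. exact (inst _ HE (tmul x0 x1) _ ltac:(md) x y x Hx Hy Hx). Qed.
Lemma mul1l x : wf x -> D (tmul tone x) x.
Proof. intros Hx. exact (inst _ HE (tmul tone x0) _ ltac:(md) x x x Hx Hx Hx). Qed.
Lemma mulDr x y z : wf x -> wf y -> wf z -> D (tmul x (tadd y z)) (tadd (tmul x y) (tmul x z)).
Proof. intros Hx Hy Hz. exact (inst _ HE (tmul x0 (tadd x1 x2)) _ ltac:(md) x y z Hx Hy Hz). Qed.
Lemma mulI x : wf x -> D (tmul x (tmul x (tinv x))) x.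
Proof. intros Hx. exact (inst _ HE (tmul x0 (tmul x0 (tinv x0))) _ ltac:(md) x x x Hx Hx Hx). Qed.

Lemma cadd_l a b c : wf c -> D a b -> D (tadd a c) (tadd b c).
Proof. intros Hc H. exact (@d_ctx _ false E (CFun (inl mAdd) [] Hole [c]) a b
  ltac:(repeat constructor; auto) H). Qed.
Lemma cadd_r a b c : wf c -> D a b -> D (tadd c a) (tadd c b).
Proof. intros Hc H. exact (@d_ctx _ false E (CFun (inl mAdd) [c] Hole []) a b
  ltac:(repeat constructor; auto) H). Qed.
Lemma cmul_l a b c : wf c -> D a b -> D (tmul a c) (tmul b c).
Proof. intros Hc H. exact (@d_ctx _ false E (CFun (inl mMul) [] Hole [c]) a b
  ltac:(repeat constructor; auto) H). Qed.
Lemma cmul_r a b c : wf c -> D a b -> D (tmul c a) (tmul c b).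
Proof. intros Hc H. exact (@d_ctx _ false E (CFun (inl mMul) [c] Hole []) a b
  ltac:(repeat constructor; auto) H). Qed.
Lemma cneg a b : D a b -> D (tneg a) (tneg b).
Proof. intros H. exact (@d_ctx _ false E (CFun (inl mNeg) [] Hole []) a b
  ltac:(repeat constructor; auto) H). Qed.

Ltac tr m := apply d_trans with m.
Ltac sy := apply d_sym.

Lemma mul1r x : wf x -> D (tmul x tone) x.
Proof. intros. tr (tmul tone x). apply mulC; auto. apply mul1l; auto. Qed.

Lemma mul0r x : wf x -> D (tmul x tzero) tzero.
Proof.
  intros Hx. set (a := tmul x tzero). assert (Ha : wf a) by (unfold a; auto).
  tr (tadd a tzero). sy; apply add0; auto.
  tr (tadd a (tadd a (tneg a))). apply cadd_r; auto. sy; apply addN; auto.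
  tr (tadd (tadd a a) (tneg a)). sy; apply addA; auto.
  tr (tadd (tmul x (tadd tzero tzero)) (tneg a)). apply cadd_l; auto. sy; apply mulDr; auto.
  tr (tadd a (tneg a)). apply cadd_l; auto. apply cmul_r; auto. apply add0; auto.
  apply addN; auto.
Qed.

Lemma add0l x : wf x -> D (tadd tzero x) x.
Proof. intros. tr (tadd x tzero). apply addC; auto. apply add0; auto. Qed.

Lemma mulNr x y : wf x -> wf y -> D (tmul x (tneg y)) (tneg (tmul x y)).
Proof.
  intros Hx Hy. set (a := tmul x (tneg y)). set (b := tmul x y).
  assert (Ha : wf a) by (unfold a; auto). assert (Hb : wf b) by (unfold b; auto).
  tr (tadd a tzero). sy; apply add0; auto.
  tr (tadd a (tadd b (tneg b))). apply cadd_r; auto. sy; apply addN; auto.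
  tr (tadd (tadd a b) (tneg b)). sy; apply addA; auto.
  tr (tadd (tmul x (tadd (tneg y) y)) (tneg b)). apply cadd_l; auto. sy; apply mulDr; auto.
  tr (tadd (tmul x tzero) (tneg b)). apply cadd_l; auto. apply cmul_r; auto.
    tr (tadd y (tneg y)). apply addC; auto. apply addN; auto.
  tr (tadd tzero (tneg b)). apply cadd_l; auto. apply mul0r; auto.
  apply add0l; auto.
Qed.

Lemma swap a b X : wf a -> wf b -> wf X -> D (tmul a (tmul b X)) (tmul b (tmul a X)).
Proof.
  intros. tr (tmul (tmul a b) X). sy; apply mulA; auto.
  tr (tmul (tmul b a) X). apply cmul_l; auto. apply mulC; auto. apply mulA; auto.
Qed.

Lemma zh_h h : wf h -> D (tmul (zero_t h) h) tzero.
Proof.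
  intros Hh. unfold zero_t.
  tr (tmul h (tadd tone (tneg (one_t h)))). apply mulC; auto.
  tr (tadd (tmul h tone) (tmul h (tneg (one_t h)))). apply mulDr; auto.
  tr (tadd h (tneg h)). 2: apply addN; auto.
  tr (tadd h (tmul h (tneg (one_t h)))). apply cadd_l; auto. apply mul1r; auto.
  apply cadd_r; auto. tr (tneg (tmul h (one_t h))). apply mulNr; auto.
  apply cneg. apply mulI; auto.
Qed.

Lemma oh_oh h : wf h -> D (tmul (one_t h) (one_t h)) (one_t h).
Proof.
  intros Hh. unfold one_t.
  tr (tmul (tmul (tinv h) h) (tmul h (tinv h))). apply cmul_l; auto. apply mulC; auto.
  tr (tmul (tinv h) (tmul h (tmul h (tinv h)))). apply mulA; auto.
  tr (tmul (tinv h) h). apply cmul_r; auto. apply mulI; auto.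
  apply mulC; auto.
Qed.

Lemma sum1 h : wf h -> D (tadd (zero_t h) (one_t h)) tone.
Proof.
  intros Hh. unfold zero_t.
  tr (tadd tone (tadd (tneg (one_t h)) (one_t h))). apply addA; auto.
  tr (tadd (@tone Sg) tzero). 2: apply add0; auto.
  apply cadd_r; auto. tr (tadd (one_t h) (tneg (one_t h))). apply addC; auto. apply addN; auto.
Qed.

Definition PropG (p : term Sg) := forall C r, wf_ctx C -> wf r ->
  D (tmul p (plug C r)) (tmul p (plug C (tmul p r))).

Lemma ctxD C a b : wf_ctx C -> D a b -> D (plug C a) (plug C b).
Proof. intros; apply d_ctx; auto. Qed.

Lemma prop_mul p g : wf p -> wf g -> PropG p -> PropG g -> PropG (tmul p g).
Proof.
  intros Hp Hg Pp Pg C r HC Hr.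
  assert (W: forall x, wf x -> wf (plug C x)) by (intros; apply wf_plug; auto).
  tr (tmul p (tmul g (plug C r))). apply mulA; auto.
  tr (tmul p (tmul g (plug C (tmul g r)))). apply cmul_r; auto.
  tr (tmul g (tmul p (plug C (tmul g r)))). apply swap; auto.
  tr (tmul g (tmul p (plug C (tmul p (tmul g r))))). apply cmul_r; auto.
  tr (tmul g (tmul p (plug C (tmul (tmul p g) r)))). apply cmul_r; auto. apply cmul_r; auto.
    apply ctxD; auto. sy; apply mulA; auto.
  tr (tmul p (tmul g (plug C (tmul (tmul p g) r)))). apply swap; auto.
  sy; apply mulA; auto.
Qed.

Lemma axF p g a b : wf p -> wf g -> wf a -> wf b -> D (tmul p a) (tmul p b) ->
  D (tmul (tmul p g) a) (tmul (tmul p g) b).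
Proof.
  intros. tr (tmul (tmul g p) a). apply cmul_l; auto. apply mulC; auto.
  tr (tmul g (tmul p a)). apply mulA; auto.
  tr (tmul g (tmul p b)). apply cmul_r; auto.
  tr (tmul (tmul g p) b). sy; apply mulA; auto.
  apply cmul_l; auto. apply mulC; auto.
Qed.

Lemma ax_zero p h : wf p -> wf h ->
  D (tmul (tmul p (zero_t h)) h) (tmul (tmul p (zero_t h)) tzero).
Proof.
  intros. tr (@tzero Sg). 2: sy; apply mul0r; auto.
  tr (tmul p (tmul (zero_t h) h)). apply mulA; auto.
  tr (tmul p tzero). apply cmul_r; auto. apply zh_h; auto. apply mul0r; auto.
Qed.

Lemma ax_one p h : wf p -> wf h ->
  D (tmul (tmul p (one_t h)) (one_t h)) (tmul (tmul p (one_t h)) tone).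
Proof.
  intros. tr (tmul p (one_t h)). 2: sy; apply mul1r; auto.
  tr (tmul p (tmul (one_t h) (one_t h))). apply mulA; auto.
  apply cmul_r; auto. apply oh_oh; auto.
Qed.

Lemma splitD p h X : wf p -> wf h -> wf X ->
  D (tmul p X) (tadd (tmul (tmul p (zero_t h)) X) (tmul (tmul p (one_t h)) X)).
Proof.
  intros. sy.
  tr (tadd (tmul p (tmul (zero_t h) X)) (tmul (tmul p (one_t h)) X)). apply cadd_l; auto. apply mulA; auto.
  tr (tadd (tmul p (tmul (zero_t h) X)) (tmul p (tmul (one_t h) X))). apply cadd_r; auto. apply mulA; auto.
  tr (tmul p (tadd (tmul (zero_t h) X) (tmul (one_t h) X))). sy; apply mulDr; auto.
  apply cmul_r; auto.
  tr (tadd (tmul X (zero_t h)) (tmul (one_t h) X)). apply cadd_l; auto. apply mulC; auto.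
  tr (tadd (tmul X (zero_t h)) (tmul X (one_t h))). apply cadd_r; auto. apply mulC; auto.
  tr (tmul X (tadd (zero_t h) (one_t h))). sy; apply mulDr; auto.
  tr (tmul X tone). apply cmul_r; auto. apply sum1; auto. apply mul1r; auto.
Qed.

End Alg.

Lemma closed_mul {Sg : signature} (a b : term Sg) : closed a -> closed b -> closed (tmul a b).
Proof. intros; repeat constructor; auto. Qed.
Lemma closed_zero_t {Sg : signature} (a : term Sg) : closed a -> closed (zero_t a).
Proof. intros; repeat constructor; auto. Qed.
Lemma closed_one_t {Sg : signature} (a : term Sg) : closed a -> closed (one_t a).
Proof. intros; repeat constructor; auto. Qed.

Lemma main {Sg : signature} (E : eqset Sg) (HE : MdE E)
  (PU : prop_pseudo_units E) (PZ : prop_pseudo_zeros E) F a b :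
  deriv true F a b -> forall p, wf p -> closed p -> PropG E p ->
  (forall x y, F x y -> wf x /\ wf y) ->
  (forall x y, F x y -> deriv false E (tmul p x) (tmul p y)) ->
  deriv false E (tmul p a) (tmul p b).
Proof.
  intros H. induction H; intros p Hp Cp Pp FW FA.
  - auto.
  - apply d_refl; auto.
  - apply d_sym; auto.
  - eapply d_trans; eauto.
  - destruct (deriv_wf _ _ _ _ H0 FW) as [Wa Wb].
    apply d_trans with (tmul p (plug C (tmul p a))). apply Pp; auto.
    apply d_trans with (tmul p (plug C (tmul p b))).
    apply cmul_r; auto. apply ctxD; auto.
    apply d_sym, Pp; auto.
  - assert (Hs : forall x, subst sg (tmul p x) = tmul p (subst sg x)).
    { intros x. unfold tmul. simpl. rewrite closed_subst; auto. }
    rewrite <- !Hs. apply d_subst; auto.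
  - assert (Wq1 : wf (tmul p (zero_t h))) by auto.
    assert (Wq2 : wf (tmul p (one_t h))) by auto.
    destruct (deriv_wf _ _ _ _ H2 (fun x y Hxy => match Hxy with or_introl h' => FW x y h' | or_intror (conj e1 e2) => ltac:(subst; auto) end)) as [Wr Ws].
    assert (IH1 : deriv false E (tmul (tmul p (zero_t h)) r) (tmul (tmul p (zero_t h)) s)).
    { apply IHderiv1; auto using closed_mul, closed_zero_t.
      - apply prop_mul; auto. intros C r0 HC Hr0. apply PZ; auto.
      - intros x y [Hxy|[-> ->]]; auto.
      - intros x y [Hxy|[-> ->]].
        + destruct (FW _ _ Hxy). apply axF; auto.
        + apply ax_zero; auto. }
    assert (IH2 : deriv false E (tmul (tmul p (one_t h)) r) (tmul (tmul p (one_t h)) s)).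
    { apply IHderiv2; auto using closed_mul, closed_one_t.
      - apply prop_mul; auto. intros C r0 HC Hr0. apply PU; auto.
      - intros x y [Hxy|[-> ->]]; auto.
      - intros x y [Hxy|[-> ->]].
        + destruct (FW _ _ Hxy). apply axF; auto.
        + apply ax_one; auto. }
    apply d_trans with (tadd (tmul (tmul p (zero_t h)) r) (tmul (tmul p (one_t h)) r)).
    apply splitD; auto.
    apply d_trans with (tadd (tmul (tmul p (zero_t h)) s) (tmul (tmul p (one_t h)) r)).
    apply cadd_l; auto.
    apply d_trans with (tadd (tmul (tmul p (zero_t h)) s) (tmul (tmul p (one_t h)) s)).
    apply cadd_r; auto.
    apply d_sym, splitD; auto.
Qed.

Theorem proposition1 (Sg : signature) (E : eqset Sg) :
  (forall a b, Md a b -> E a b) ->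
  (forall a b, E a b -> wf a /\ wf b) ->
  prop_pseudo_units E -> prop_pseudo_zeros E ->
  forall t r s : term Sg,
    wf t -> closed t -> wf r -> closed r -> wf s -> closed s ->
    (deriv true (add_eq E t tzero) r s ->
       deriv false E (tmul (zero_t t) r) (tmul (zero_t t) s)) /\
    (deriv true (add_eq E (one_t t) tone) r s ->
       deriv false E (tmul (one_t t) r) (tmul (one_t t) s)).
Proof.
  intros HE EW PU PZ t r s Wt Ct Wr Cr Ws Cs. split; intros H.
  - eapply (main E HE PU PZ); eauto using closed_zero_t.
    + intros C r0 HC Hr0. apply PZ; auto.
    + intros x y [Hxy|[-> ->]]; auto.
    + intros x y [Hxy|[-> ->]].
      * destruct (EW _ _ Hxy). apply cmul_r; auto. apply d_ax; auto.
      * apply d_trans with (@tzero Sg). apply zh_h; auto. apply d_sym, mul0r; auto.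
  - eapply (main E HE PU PZ); eauto using closed_one_t.
    + intros C r0 HC Hr0. apply PU; auto.
    + intros x y [Hxy|[-> ->]]; auto.
    + intros x y [Hxy|[-> ->]].
      * destruct (EW _ _ Hxy). apply cmul_r; auto. apply d_ax; auto.
      * apply d_trans with (one_t t). apply oh_oh; auto. apply d_sym, mul1r; auto.
Qed.
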